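(* Let \(G=(V,E)\) be a connected split graph with clique \(C\) and independent set \(I\), and let \(T\) be a spanning tree of \(G\). Let \(X\) be any one of the searches MNS, MCS, LDFS, LBFS. Then \(T\) is the \(\mathcal{L}\)-tree of some \(X\) ordering of \(G\) if and only if there exist a partition \(V=L\cup V(P)\) and a path \(P=(v_1,\dots,v_k)\) in \(T\) such that: (1) \(T\) is a caterpillar tree consisting of the set of leaves \(L\) and the dominating path \(P\), and \(P\) contains every vertex of \(C\); (2) for every leaf \(w\in L\) whose neighbor in \(T\) is \(v_i\), we have \(wv_j\notin E\) for all \(j>i\); (3) for every \(v_i\in I\cap V(P)\), with \(l:=|\{v_1,\dots,v_{i-1}\}\cap C|\): (a) \(\{v_1,\dots,v_{i-1}\}\cap C\subseteq N(v_i)\), and (b) \(\{v_{i+1},\dots,v_{i+\deg(v_i)-l}\}\subseteq N(v_i)\).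
   Context: A split graph is a graph whose vertex set can be partitioned into a clique \(C\) and an independent set \(I\). A tree is a caterpillar if it has a dominating path, i.e., a path such that every vertex is on it or adjacent to a vertex on it. \(\deg(v)=|N(v)|\) in \(G\). With \(n=|V|\): an LBFS ordering is produced by starting with label \((n)\) on a start vertex \(s\), empty labels elsewhere, and for \(i=1,\dots,n\) picking an unnumbered vertex of lexicographically largest label as \(v_i\) and appending \(n-i\) to the labels of its unnumbered neighbors. An LDFS ordering is produced similarly with \(s\) labelled \((0)\), others empty, and prepending \(i\) instead. An MCS ordering is produced by repeatedly choosing an unnumbered vertex with the most numbered neighbors. An MNS ordering uses set labels: all \(\emptyset\), \(s\) gets \(\{n+1\}\); repeatedly pick an unnumbered vertex with inclusion-maximal label as \(v_i\) and add \(i\) to the labels of its unnumbered neighbors. Ties are broken arbitrarily. The \(\mathcal{L}\)-tree of an ordering \(\sigma=(u_1,\dots,u_n)\) is the tree on \(V\) containing, for each \(i\ge2\), the edge from \(u_i\) to its rightmost neighbor \(u_j\) with \(j<i\). *)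

(* Defs.v *)
From mathcomp Require Import all_boot.
Set Implicit Arguments. Unset Strict Implicit. Unset Printing Implicit Defensive.

Section Graphs.
Variable V : finType.

Definition simple_graph (e : rel V) : Prop :=
  (forall x y, e x y = e y x) /\ (forall x, ~~ e x x).

Definition connected (e : rel V) : Prop :=
  0 < #|V| /\ forall x y, connect e x y.

Definition split_partition (e : rel V) (C I : {set V}) : Prop :=
  C :&: I = set0 /\ C :|: I = setT /\
  (forall x y, x \in C -> y \in C -> x != y -> e x y) /\
  (forall x y, x \in I -> y \in I -> ~~ e x y).

Definition acyclic (t : rel V) : Prop :=
  forall c : seq V, uniq c -> 3 <= size c -> ~~ cycle t c.

Definition spanning_tree (e t : rel V) : Prop :=
  simple_graph t /\ (forall x y, t x y -> e x y) /\
  (forall x y, connect t x y) /\ acyclic t.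

Definition deg (e : rel V) (v : V) : nat := #|[set y | e v y]|.

Definition is_vertex_ordering (s : seq V) : bool := uniq s && (size s == #|V|).

Fixpoint lex_le (a b : seq nat) : bool :=
  match a, b with
  | [::], _ => true
  | _ :: _, [::] => false
  | x :: a', y :: b' => (x < y) || ((x == y) && lex_le a' b')
  end.
Definition lex_lt (a b : seq nat) : bool := lex_le a b && (a != b).

(* Labels of an unnumbered vertex v once the prefix s (numbered vertices, in
   order, s = (v_1,...,v_(size s))) has been numbered.  Position j (0-based)
   in s corresponds to the number j.+1.  The start vertex's special label is
   irrelevant after step 1, so step 1 is an arbitrary choice of start vertex. *)
Definition lbfs_label (e : rel V) (s : seq V) (v : V) : seq nat :=
  (* appending n - i for i = 1, 2, ... *)
  [seq #|V| - j.+1 | j <- iota 0 (size s) & e (nth v s j) v].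
Definition ldfs_label (e : rel V) (s : seq V) (v : V) : seq nat :=
  (* prepending i for i = 1, 2, ... *)
  rev [seq j.+1 | j <- iota 0 (size s) & e (nth v s j) v].
Definition mcs_label (e : rel V) (s : seq V) (v : V) : nat :=
  count (fun u => e u v) s.
Definition mns_label (e : rel V) (s : seq V) (v : V) : seq nat :=
  [seq j.+1 | j <- iota 0 (size s) & e (nth v s j) v].
Definition proper_sub (a b : seq nat) : bool :=
  all (fun x => x \in b) a && ~~ all (fun x => x \in a) b.

Definition search_ordering (L : Type) (lab : seq V -> V -> L)
  (lt : L -> L -> bool) (sigma : seq V) : Prop :=
  is_vertex_ordering sigma /\
  forall i, 0 < i < size sigma ->
    forall u, u \in drop i sigma ->
      ~~ lt (lab (take i sigma) (nth u sigma i)) (lab (take i sigma) u).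

Inductive search := MNS | MCS | LDFS | LBFS.

Definition is_search_ordering (e : rel V) (X : search) (sigma : seq V) : Prop :=
  match X with
  | MNS => search_ordering (mns_label e) proper_sub sigma
  | MCS => search_ordering (mcs_label e) (fun a b => a < b) sigma
  | LDFS => search_ordering (ldfs_label e) lex_lt sigma
  | LBFS => search_ordering (lbfs_label e) lex_lt sigma
  end.

Definition ltree_parent (e : rel V) (sigma : seq V) (x : V) : option V :=
  ohead (rev [seq y <- take (index x sigma) sigma | e x y]).

Definition ltree (e : rel V) (sigma : seq V) : rel V :=
  fun x y => (ltree_parent e sigma x == Some y) || (ltree_parent e sigma y == Some x).

Definition is_path (t : rel V) (P : seq V) : bool :=
  if P is x :: P' then uniq P && path t x P' else false.
End Graphs.

(* Main.v *)
Require Import Defs.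
From mathcomp Require Import all_boot zify.
Set Implicit Arguments. Unset Strict Implicit. Unset Printing Implicit Defensive.

Lemma lex_le_refl a : lex_le a a.
Proof. by elim: a => //= x a ->; rewrite eqxx ltnn. Qed.

Lemma lex_antisym a b : lex_le a b -> lex_le b a -> a = b.
Proof.
elim: a b => [|x a IH] [|y b] //=.
case/orP=> [lxy|/andP[/eqP exy h1]] /orP[lyx|/andP[/eqP eyx h2]]; try lia.
by rewrite exy (IH b h1 h2).
Qed.

Lemma lex_le_trans a b c : lex_le a b -> lex_le b c -> lex_le a c.
Proof.
elim: a b c => [|x a IH] [|y b] [|z c] //=.
case/orP=> [lxy|/andP[/eqP exy h1]] /orP[lyz|/andP[/eqP eyz h2]].
- by rewrite (ltn_trans lxy lyz).
- by rewrite -eyz lxy.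
- by rewrite exy lyz.
- by rewrite exy eyz eqxx (IH _ _ h1 h2) orbT.
Qed.

Lemma lex_lt_irr a : ~~ lex_lt a a.
Proof. by rewrite /lex_lt eqxx andbF. Qed.

Lemma lex_lt_trans a b c : lex_lt a b -> lex_lt b c -> lex_lt a c.
Proof.
rewrite /lex_lt => /andP[h1 n1] /andP[h2 n2].
rewrite (lex_le_trans h1 h2) /=; apply/eqP => eac.
move: h1; rewrite eac => h1.
by move: n2; rewrite (lex_antisym h2 h1) eqxx.
Qed.

Lemma lex_sub a b : sorted gtn a -> sorted gtn b -> {subset b <= a} -> lex_le b a.
Proof.
elim: a b => [|x a IH] [|y b] //=.
- by move=> _ _ /(_ y); rewrite inE eqxx => /(_ isT).
move=> pa pb sub.
have ya : y \in x :: a by apply: sub; rewrite inE eqxx.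
have allx : all (gtn x) a by apply: order_path_min pa => ? ? ?; lia.
have ally : all (gtn y) b by apply: order_path_min pb => ? ? ?; lia.
have yx : y <= x.
  move: ya; rewrite inE => /orP[/eqP -> //|ya].
  by move/allP: allx => /(_ _ ya) /=; lia.
rewrite leq_eqVlt in yx; case/orP: yx => [/eqP eyx|->//].
rewrite eyx eqxx ltnn /=; apply: IH.
- exact: path_sorted pa.
- exact: path_sorted pb.
move=> z zb.
have : z \in x :: a by apply: sub; rewrite inE zb orbT.
rewrite inE => /orP[/eqP ezx|//].
by move/allP: ally => /(_ _ zb) /=; lia.
Qed.

Section Labels.
Variable V : finType.
Variable e : rel V.

Definition pl (s : seq V) (v : V) : seq nat :=
  [seq j <- iota 0 (size s) | e (nth v s j) v].

Definition SubN (s : seq V) (u w : V) : Prop :=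
  forall x, x \in s -> e x u -> e x w.

Lemma mem_pl s v j : (j \in pl s v) = (j < size s) && e (nth v s j) v.
Proof. by rewrite mem_filter mem_iota add0n andbC. Qed.

Lemma pl_sub s u w : SubN s u w -> {subset pl s u <= pl s w}.
Proof.
move=> H j; rewrite !mem_pl => /andP[js ej]; rewrite js /=.
rewrite (set_nth_default u w js); apply: H; first exact: mem_nth.
exact: ej.
Qed.

Lemma pl_strict s u w x : x \in s -> e x u -> ~~ e x w ->
  exists j, j \in pl s u /\ j \notin pl s w.
Proof.
move=> xs exu nexw; exists (index x s).
by rewrite !mem_pl index_mem xs /= !nth_index // exu nexw.
Qed.


Lemma pl_sorted s v : sorted ltn (pl s v).
Proof. apply: sorted_filter; first exact: ltn_trans. exact: iota_ltn_sorted. Qed.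

Lemma pl_cat s t v : (forall y, y \in t -> ~~ e y v) -> pl (s ++ t) v = pl s v.
Proof.
move=> H; rewrite /pl size_cat iotaD filter_cat.
have -> : [seq j <- iota (0 + size s) (size t) | e (nth v (s ++ t) j) v] = [::].
  rewrite -(filter_pred0 (iota (0 + size s) (size t))).
  apply: eq_in_filter => j; rewrite mem_iota add0n => /andP[j1 j2].
  rewrite nth_cat ltnNge j1 /=; apply/negbTE/H; apply: mem_nth; by rewrite ltn_subLR.
rewrite cats0; apply: eq_in_filter => j; rewrite mem_iota add0n => /andP[_ j2].
by rewrite nth_cat j2.
Qed.

Definition SubNs (s : seq V) (u w : V) : Prop :=
  SubN s u w /\ exists x, [/\ x \in s, e x w & ~~ e x u].

Record searchspec (L : Type) (lab : seq V -> V -> L) (lt : L -> L -> bool) := {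
  ss_irr : forall a, ~~ lt a a;
  ss_trans : forall a b c, lt a b -> lt b c -> lt a c;
  ss_A1 : forall s w u, size s <= #|V| -> SubN s u w -> ~~ lt (lab s w) (lab s u);
  ss_A2 : forall s w u, size s <= #|V| -> SubNs s w u -> lt (lab s w) (lab s u);
  ss_cat : forall s t v, (forall y, y \in t -> ~~ e y v) -> lab (s ++ t) v = lab s v
}.

Lemma mns_spec : searchspec (mns_label e) Defs.proper_sub.
Proof.
split.
- by move=> a; rewrite /Defs.proper_sub; case: (all _ a).
- move=> a b c; rewrite /Defs.proper_sub => /andP[/allP ab nba] /andP[/allP bc ncb].
  apply/andP; split; first by apply/allP => x /ab /bc.
  by apply: contra nba => /allP ca; apply/allP => x /bc /ca.
- move=> s w u _ H; rewrite /Defs.proper_sub negb_and negbK; apply/orP; right.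
  apply/allP => x /mapP[j /(pl_sub H) jw ->]; exact: map_f.
- move=> s w u _ [H [x [xs exu nexw]]]; rewrite /Defs.proper_sub; apply/andP; split.
  + apply/allP => x' /mapP[j /(pl_sub H) jw ->]; exact: map_f.
  + have [j [ju jw]] := pl_strict xs exu nexw.
    apply/allPn; exists j.+1; first exact: map_f.
    by rewrite mem_map //; move=> ? ? [].
- by move=> s t v H; rewrite /mns_label -/(pl _ _) pl_cat.
Qed.

Lemma count_sub (s : seq V) u w : SubN s u w ->
  count (fun y => e y u) s <= count (fun y => e y w) s.
Proof.
elim: s => //= y s IH H.
have H' : SubN s u w by move=> x xs; apply: H; rewrite inE xs orbT.
have := IH H'; case eu: (e y u); case ew: (e y w) => //=; try lia.
by move: (H y (mem_head _ _) eu); rewrite ew.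
Qed.

Lemma count_strict (s : seq V) u w : SubNs s u w ->
  count (fun y => e y u) s < count (fun y => e y w) s.
Proof.
elim: s => [|y s IH] [H [x [xs exw nexu]]] //=.
have H' : SubN s u w by move=> x' xs'; apply: H; rewrite inE xs' orbT.
move: xs; rewrite inE => /orP[/eqP exy|xs].
  subst x; rewrite exw (negbTE nexu) /=; have := count_sub H'; lia.
have := IH (conj H' (ex_intro _ x (And3 xs exw nexu))).
case eu: (e y u); case ew: (e y w) => //=; try lia.
by move: (H y (mem_head _ _) eu); rewrite ew.
Qed.

Lemma mcs_spec : searchspec (mcs_label e) (fun a b => a < b).
Proof.
split.
- by move=> a; rewrite ltnn.
- move=> a b c; exact: ltn_trans.
- by move=> s w u _ H; rewrite -leqNgt; apply: count_sub.
- by move=> s w u _ H; apply: count_strict.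
- move=> s t v H; rewrite /mcs_label count_cat.
  rewrite [count _ t](eq_in_count (a2 := pred0)) ?count_pred0 ?addn0 //.
  by move=> y /H /negbTE.
Qed.

Lemma lex_A1 (lab : seq nat -> seq nat) (a b : seq nat) :
  sorted gtn a -> sorted gtn b -> {subset b <= a} -> ~~ lex_lt a b.
Proof.
move=> sa sb sub; rewrite /lex_lt; apply/negP => /andP[ab nab].
by move: nab; rewrite (lex_antisym ab (lex_sub sa sb sub)) eqxx.
Qed.

Lemma lex_A2 (a b : seq nat) x :
  sorted gtn a -> sorted gtn b -> {subset a <= b} -> x \in b -> x \notin a -> lex_lt a b.
Proof.
move=> sa sb sub xb xa; rewrite /lex_lt (lex_sub sb sa sub) /=.
by apply/eqP => eab; move: xa; rewrite eab xb.
Qed.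

Lemma lbfs_sorted s v : size s <= #|V| -> sorted gtn (lbfs_label e s v).
Proof.
move=> ss; rewrite /lbfs_label -/(pl _ _) sorted_map.
apply: (@sub_in_sorted _ (fun j => j < size s) ltn).
- move=> i j; rewrite !unfold_in /= => hi hj hij.
  apply: ltn_sub2l => //; apply: leq_trans ss; apply: leq_trans hj; exact: hij.
- by apply/allP => j; rewrite mem_pl => /andP[].
- exact: pl_sorted.
Qed.

Lemma ldfs_sorted s v : sorted gtn (ldfs_label e s v).
Proof.
rewrite /ldfs_label -/(pl _ _) rev_sorted sorted_map.
apply: sub_sorted (pl_sorted s v) => i j /=; lia.
Qed.

Lemma lbfs_spec : searchspec (lbfs_label e) lex_lt.
Proof.
split.
- exact: lex_lt_irr.
- exact: lex_lt_trans.
- move=> s w u ss H; apply: lex_A1 (lbfs_sorted _ ss) (lbfs_sorted _ ss) _ => //.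
  rewrite /lbfs_label -!/(pl _ _) => x /mapP[j /(pl_sub H) jw ->]; exact: map_f.
- move=> s w u ss [H [x [xs exu nexw]]].
  have [j [ju jw]] := pl_strict xs exu nexw.
  apply: (@lex_A2 _ _ (#|V| - j.+1)) (lbfs_sorted _ ss) (lbfs_sorted _ ss) _ _ _.
  + rewrite /lbfs_label -!/(pl _ _) => y /mapP[i /(pl_sub H) iw ->]; exact: map_f.
  + rewrite /lbfs_label -!/(pl _ _); exact: map_f.
  + rewrite /lbfs_label -!/(pl _ _); apply/mapP => -[i iw ei].
    move: (iw) (ju); rewrite !mem_pl => /andP[i1 _] /andP[j1 _].
    have eij : i = j by lia.
    by move: jw; rewrite -eij iw.
- by move=> s t v H; rewrite /lbfs_label -!/(pl _ _) pl_cat.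
Qed.

Lemma ldfs_spec : searchspec (ldfs_label e) lex_lt.
Proof.
split.
- exact: lex_lt_irr.
- exact: lex_lt_trans.
- move=> s w u ss H; apply: lex_A1 (ldfs_sorted _ _) (ldfs_sorted _ _) _ => //.
  rewrite /ldfs_label -!/(pl _ _) => x; rewrite !mem_rev => /mapP[j /(pl_sub H) jw ->]; exact: map_f.
- move=> s w u ss [H [x [xs exu nexw]]].
  have [j [ju jw]] := pl_strict xs exu nexw.
  apply: (@lex_A2 _ _ j.+1) (ldfs_sorted _ _) (ldfs_sorted _ _) _ _ _.
  + rewrite /ldfs_label -!/(pl _ _) => y; rewrite !mem_rev => /mapP[i /(pl_sub H) iw ->]; exact: map_f.
  + rewrite /ldfs_label -!/(pl _ _) mem_rev; exact: map_f.
  + by rewrite /ldfs_label -!/(pl _ _) mem_rev mem_map // => ? ? [].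
- by move=> s t v H; rewrite /ldfs_label -!/(pl _ _) pl_cat.
Qed.

End Labels.

Lemma index_rcons_eq (T : eqType) (s : seq T) z y : z \notin s ->
  index y (rcons s z) = if y \in s then index y s else size s + (z != y).
Proof.
move=> zs; rewrite -cats1 index_cat; case: (y \in s) => //=.
by case: (z == y).
Qed.

Lemma last_filterP (T : eqType) (s : seq T) (a : pred T) p : uniq s ->
  ohead (rev (filter a s)) = Some p <->
  [/\ p \in s, a p & forall y, y \in s -> a y -> index y s <= index p s].
Proof.
elim/last_ind: s => [|s z IH] us.
  by split => [//|[]].
move: us; rewrite rcons_uniq => /andP[zs us].
have idx := index_rcons_eq _ zs.
rewrite filter_rcons; case az: (a z).
- rewrite rev_rcons /=; split.
  + case=> <-; split => //; first by rewrite mem_rcons mem_head.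
    move=> y; rewrite mem_rcons inE => /orP[/eqP ->|ys] _.
      by rewrite !idx (negbTE zs).
    rewrite !idx ys (negbTE zs) eqxx /= addn0; exact: index_size.
  + case=> ps ap H; have := H z; rewrite mem_rcons mem_head => /(_ isT az).
    rewrite !idx (negbTE zs) eqxx addn0.
    move: ps; rewrite mem_rcons inE => /orP[/eqP -> //|ps].
    by rewrite ps leqNgt index_mem ps.
- rewrite IH //; split.
  + case=> ps ap H; split => //; first by rewrite mem_rcons inE ps orbT.
    move=> y; rewrite mem_rcons inE => /orP[/eqP ->|ys]; first by rewrite az.
    by move=> ay; rewrite !idx ys ps; apply: H.
  + case=> ps ap H.
    have pz : p != z by apply: contraTneq ap => ->; rewrite az.
    move: ps; rewrite mem_rcons inE (negbTE pz) /= => ps; split => //.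
    move=> y ys ay; have := H y; rewrite mem_rcons inE ys orbT => /(_ isT ay).
    by rewrite !idx ys ps.
Qed.

Lemma index_take_in (T : eqType) (s : seq T) i y : y \in take i s ->
  index y (take i s) = index y s.
Proof. by move=> yt; rewrite -{2}(cat_take_drop i s) index_cat yt. Qed.

Section Ord.
Variable V : finType.
Variable sigma : seq V.
Hypothesis su : uniq sigma.
Hypothesis sall : forall x, x \in sigma.

Definition pos x := index x sigma.

Lemma pos_inj x y : pos x = pos y -> x = y.
Proof.
move=> h; rewrite -(nth_index x (sall x)) -(nth_index x (sall y)).
by rewrite -/(pos x) -/(pos y) h.
Qed.

Lemma pos_lt x : pos x < size sigma.
Proof. by rewrite /pos index_mem. Qed.

Lemma in_take_pos i x : (x \in take i sigma) = (pos x < i).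
Proof. by rewrite in_take. Qed.

Lemma in_drop_pos i x : (x \in drop i sigma) = (i <= pos x).
Proof.
have := sall x; rewrite -{1}(cat_take_drop i sigma) mem_cat in_take_pos.
have := su; rewrite -{1}(cat_take_drop i sigma) cat_uniq => /and3P[_ dis _].
case: (ltnP (pos x) i) => h /= H.
- apply/negbTE/negP => xd; move/hasP: dis; apply; exists x => //; by rewrite in_take_pos.
- by rewrite H.
Qed.

Lemma nth_pos x0 i : i < size sigma -> pos (nth x0 sigma i) = i.
Proof. by move=> h; rewrite /pos index_uniq. Qed.

Lemma sigma_sorted : sorted (fun a b => pos a < pos b) sigma.
Proof.
case E: sigma => [//|x0 s]; rewrite -E.
apply/(sortedP x0) => i hi.
by rewrite !nth_pos //; apply: ltnW.
Qed.

Lemma par_iff (e : rel V) x p : ltree_parent e sigma x = Some p <->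
  [/\ pos p < pos x, e x p & forall y, pos y < pos x -> e x y -> pos y <= pos p].
Proof.
rewrite /ltree_parent -/(pos x) last_filterP ?take_uniq //.
rewrite in_take_pos; split.
- case=> pp ep H; split => // y yx exy.
  have yt : y \in take (pos x) sigma by rewrite in_take_pos.
  have pt : p \in take (pos x) sigma by rewrite in_take_pos.
  by have := H y yt exy; rewrite !index_take_in.
- case=> pp ep H; split => // y yt exy.
  have pt : p \in take (pos x) sigma by rewrite in_take_pos.
  rewrite !index_take_in //; apply: H => //; by rewrite -in_take_pos.
Qed.

Lemma par_none (e : rel V) x : (forall y, pos y < pos x -> ~~ e x y) ->
  ltree_parent e sigma x = None.
Proof.
move=> H; rewrite /ltree_parent (eq_in_filter (a2 := pred0)) ?filter_pred0 //.
by move=> y; rewrite in_take => [yt|]; [apply/negbTE/H|].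
Qed.

Lemma par_exists (e : rel V) x y : pos y < pos x -> e x y ->
  exists p, ltree_parent e sigma x = Some p.
Proof.
move=> yx exy; rewrite /ltree_parent.
have : y \in rev [seq y <- take (index x sigma) sigma | e x y].
  by rewrite mem_rev mem_filter exy in_take_pos.
case: (rev _) => [//|p l] _; by exists p.
Qed.

End Ord.

Lemma filter_head (T : eqType) (s : seq T) (Q : pred T) y f :
  filter Q s = y :: f -> forall z, z \in s -> index z s < index y s -> ~~ Q z.
Proof.
elim: s => [//|w s IH] /=; case Qw: (Q w).
- by case=> <- _ z _ /=; rewrite eqxx.
- move=> H z; rewrite inE /=.
  have yw : (w == y) = false.
    apply: negbTE; apply/eqP => ewy.
    have : y \in filter Q s by rewrite H mem_head.
    by rewrite mem_filter -ewy Qw.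
  rewrite yw; case/orP => [/eqP ->|zs]; first by rewrite Qw.
  case: eqP => [<-|_]; first by rewrite Qw.
  rewrite ltnS; exact: IH.
Qed.

Lemma filter_sorted_rel (T : eqType) (s : seq T) (Q : pred T) (R : rel T) :
  uniq s ->
  (forall x y, x \in s -> y \in s -> Q x -> Q y -> index x s < index y s ->
     (forall z, z \in s -> index x s < index z s < index y s -> ~~ Q z) -> R x y) ->
  sorted R (filter Q s).
Proof.
elim: s => [//|x s IH] /= /andP[xs us] H.
have H' : forall x' y', x' \in s -> y' \in s -> Q x' -> Q y' -> index x' s < index y' s ->
     (forall z, z \in s -> index x' s < index z s < index y' s -> ~~ Q z) -> R x' y'.
  move=> x' y' x's y's Qx Qy lt btw; apply: H => //; try by rewrite inE ?x's ?y's orbT.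
  - have -> : (x == x') = false by apply/negbTE; apply: contraNneq xs => ->.
    have -> : (x == y') = false by apply/negbTE; apply: contraNneq xs => ->.
    by [].
  - move=> z; rewrite inE => /orP[/eqP ->|zs]; first by rewrite eqxx.
    have -> : (x == z) = false by apply/negbTE; apply: contraNneq xs => ->.
    have -> : (x == x') = false by apply/negbTE; apply: contraNneq xs => ->.
    have -> : (x == y') = false by apply/negbTE; apply: contraNneq xs => ->.
    rewrite !ltnS; exact: btw.
have IHs := IH us H'.
case Qx: (Q x) => //.
move: IHs; case Ef: [seq x <- s | Q x] => [|y f] /=; first by [].
move=> pf; rewrite pf andbT.
have yf : y \in filter Q s by rewrite Ef mem_head.
have ys : y \in s by move: yf; rewrite mem_filter => /andP[].
have Qy : Q y by move: yf; rewrite mem_filter => /andP[].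
have xy : (x == y) = false by apply/negbTE; apply: contraNneq xs => ->.
apply: (H x y) => //.
- exact: mem_head.
- by rewrite inE ys orbT.
- by rewrite /= eqxx xy.
move=> z; rewrite inE => /orP[/eqP ->|zs]; first by rewrite /= eqxx.
have xz : (x == z) = false by apply/negbTE; apply: contraNneq xs => ->.
rewrite /= eqxx xz xy /= ltnS => hz; exact: filter_head Ef z zs hz.
Qed.

Lemma sorted_mono (T : Type) (s : seq T) (f : T -> nat) x0 i j :
  sorted (fun a b => f a < f b) s -> i < size s -> j < size s ->
  (f (nth x0 s i) < f (nth x0 s j)) = (i < j).
Proof.
move=> ss hi hj.
have tr : transitive (fun a b => f a < f b) by move=> ? ? ? ; apply: ltn_trans.
have mono := sorted_ltn_nth tr x0 ss.
case: (ltngtP i j) => h.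
- by apply: mono; rewrite ?inE.
- apply/negbTE; rewrite -leqNgt; apply: ltnW; by apply: mono; rewrite ?inE.
- by rewrite h ltnn.
Qed.

Lemma sorted_take_mem (T : eqType) (s : seq T) (f : T -> nat) x0 k y :
  sorted (fun a b => f a < f b) s -> uniq s -> k < size s -> y \in s ->
  (y \in take k s) = (f y < f (nth x0 s k)).
Proof.
move=> ss us hk ys; rewrite in_take // -{2}(nth_index x0 ys).
by rewrite sorted_mono // index_mem.
Qed.

Lemma sorted_drop_mem (T : eqType) (s : seq T) (f : T -> nat) x0 k y :
  sorted (fun a b => f a < f b) s -> uniq s -> k < size s -> y \in s ->
  (y \in drop k s) = (f (nth x0 s k) <= f y).
Proof.
move=> ss us hk ys.
have : y \in take k s ++ drop k s by rewrite cat_take_drop.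
have := us; rewrite -{1}(cat_take_drop k s) cat_uniq => /and3P[_ dis _].
rewrite mem_cat (sorted_take_mem x0 ss us hk ys) => H.
rewrite leqNgt; case E: (f y < f (nth x0 s k)) H => /= H.
- apply/negP => yd; move/hasP: dis; apply; exists y => //.
  by rewrite (sorted_take_mem x0 ss us hk ys).
- by rewrite H.
Qed.

Lemma exists_max (T : eqType) (L : Type) (f : T -> L) (lt : L -> L -> bool) (l : seq T) :
  (forall a, ~~ lt a a) -> (forall a b c, lt a b -> lt b c -> lt a c) ->
  l != [::] -> exists2 m, m \in l & forall y, y \in l -> ~~ lt (f m) (f y).
Proof.
move=> irr tr; elim: l => [//|x l IH] _.
case: (altP (l =P [::])) => [->|ln].
  by exists x => [|y]; rewrite ?inE ?eqxx // => /eqP ->.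
have [m ml mmax] := IH ln.
case lmx: (lt (f m) (f x)).
- exists x; first exact: mem_head.
  move=> y; rewrite inE => /orP[/eqP ->|yl]; first exact: irr.
  apply/negP => hxy; move: (mmax y yl); by rewrite (tr _ _ _ lmx hxy).
- exists m; first by rewrite inE ml orbT.
  by move=> y; rewrite inE => /orP[/eqP ->|yl]; [rewrite lmx|apply: mmax].
Qed.

Lemma max_first (T : eqType) (L : Type) (f : T -> L) (lt : L -> L -> bool) (l : seq T) :
  (forall a, ~~ lt a a) -> (forall a b c, lt a b -> lt b c -> lt a c) ->
  exists l', perm_eq l l' /\
    forall i, i < size l' -> forall u, u \in drop i l' -> ~~ lt (f (nth u l' i)) (f u).
Proof.
move=> irr tr; move: {2}(size l) (leqnn (size l)) => n; elim: n l => [|n IH] l hl.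
  move: hl; rewrite leqn0 size_eq0 => /eqP ->; by exists [::].
case: (altP (l =P [::])) => [->|ln]; first by exists [::].
have [m ml mmax] := exists_max f irr tr ln.
have [l'' [pl'' H'']] : exists l', perm_eq (rem m l) l' /\
    forall i, i < size l' -> forall u, u \in drop i l' -> ~~ lt (f (nth u l' i)) (f u).
  apply: IH; rewrite size_rem //; move: hl; case: (size l) => //.
exists (m :: l''); split.
  by apply: perm_trans (perm_to_rem ml) _; rewrite perm_cons.
case=> [|i] hi u /=.
- move=> ul; apply: mmax.
  rewrite (perm_mem (perm_to_rem ml)) inE (perm_mem pl''); by rewrite inE in ul.
- by move=> ud; apply: H''.
Qed.

Lemma crossing (T : finType) (e : rel T) (P : pred T) a c :
  connect e a c -> P a -> ~~ P c -> exists x y, [/\ P x, ~~ P y & e x y].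
Proof.
move/connectP => [p pth ->] {c}.
elim: p a pth => [|z p IH] a /=; first by move=> _ ->.
case/andP=> eaz pz Pa nPl.
case Pz: (P z); first exact: IH pz Pz nPl.
by exists a, z; rewrite Pz.
Qed.

Section Split.
Variables (V : finType) (e : rel V) (C I : {set V}).
Hypothesis esym : forall x y, e x y = e y x.
Hypothesis eirr : forall x, ~~ e x x.
Hypothesis HCI : C :&: I = set0.
Hypothesis HCU : C :|: I = setT.
Hypothesis Hclq : forall x y, x \in C -> y \in C -> x != y -> e x y.
Hypothesis Hind : forall x y, x \in I -> y \in I -> ~~ e x y.

Lemma I_notC x : x \in I -> x \notin C.
Proof.
move=> xI; apply/negP => xC.
have : x \in C :&: I by rewrite inE xC xI.
by rewrite HCI inE.
Qed.

Lemma notC_I x : x \notin C -> x \in I.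
Proof.
move=> nxC; have : x \in C :|: I by rewrite HCU inE.
by rewrite inE (negbTE nxC).
Qed.

Lemma nbrI_C x y : x \in I -> e x y -> y \in C.
Proof.
move=> xI exy; apply/negPn/negP => /notC_I yI.
by move: (Hind xI yI); rewrite exy.
Qed.

End Split.

Section Forward.
Variables (V : finType) (e : rel V) (C I : {set V}) (t : rel V).
Hypothesis esym : forall x y, e x y = e y x.
Hypothesis eirr : forall x, ~~ e x x.
Hypothesis conn : forall x y, connect e x y.
Hypothesis HCI : C :&: I = set0.
Hypothesis HCU : C :|: I = setT.
Hypothesis Hclq : forall x y, x \in C -> y \in C -> x != y -> e x y.
Hypothesis Hind : forall x y, x \in I -> y \in I -> ~~ e x y.
Variable sigma : seq V.
Hypothesis su : uniq sigma.
Hypothesis ssize : size sigma = #|V|.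
Hypothesis MP : forall i, 0 < i < size sigma -> forall u, u \in drop i sigma ->
  ~ SubNs e (take i sigma) (nth u sigma i) u.
Hypothesis tl : forall x y, t x y = ltree e sigma x y.

Lemma sall x : x \in sigma.
Proof.
apply/negPn/negP => xs.
have : uniq (x :: sigma) by rewrite /= xs su.
move/card_uniqP => /= h.
by have := max_card (mem (x :: sigma)); rewrite h ssize ltnn.
Qed.

Local Notation pos := (pos sigma).
Local Notation I_notC := (I_notC HCI).
Local Notation notC_I := (notC_I HCU).
Local Notation nbrI_C := (nbrI_C HCU Hind).
Local Notation pos_lt := (pos_lt sall).
Local Notation in_take_pos := (in_take_pos sall).
Local Notation in_drop_pos := (in_drop_pos su sall).
Local Notation nth_pos := (nth_pos su).
Local Notation pos_inj := (pos_inj sall).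

Lemma MPpos b u : 0 < pos b -> pos b <= pos u ->
  (forall x, pos x < pos b -> e x b -> e x u) ->
  forall x, pos x < pos b -> e x u -> e x b.
Proof.
move=> hb hbu sub x hx exu; apply/negPn/negP => nexb.
have hi : 0 < pos b < size sigma by rewrite hb pos_lt.
apply: (MP hi (u := u)); first by rewrite in_drop_pos.
rewrite nth_index; last exact: sall.
split.
- move=> y; rewrite in_take_pos; exact: sub.
- exists x; split => //; by rewrite in_take_pos.
Qed.

Lemma G b : 0 < pos b -> exists x, pos x < pos b /\ e x b.
Proof.
move=> hb.
case: (boolP [exists x, (pos x < pos b) && e x b]) => [/existsP[x /andP[h1 h2]]|nex].
  by exists x.
exfalso.
have h0 : 0 < size sigma by apply: leq_ltn_trans (pos_lt b).
pose u1 := nth b sigma 0.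
have pu1 : pos u1 = 0 by rewrite /u1 nth_pos.
have Pa : (fun z => pos z < pos b) u1 by rewrite /= pu1.
have nPc : ~~ (fun z => pos z < pos b) b by rewrite /= ltnn.
have [x [y [px py exy]]] := @crossing _ e (fun z => pos z < pos b) _ _ (conn u1 b) Pa nPc.
move: py; rewrite /= -leqNgt => py.
case: (eqVneq y b) => [eyb|nyb].
  by move/existsP: nex; apply; exists x; rewrite px -eyb exy.
have H : e x b.
  apply: (MPpos hb py _ px exy) => z hz ezb; exfalso.
  move/existsP: (nex); apply; exists z; by rewrite hz ezb.
move/existsP: nex; apply; exists x; by rewrite px H.
Qed.

Lemma F2 b y a : b \in I -> 0 < pos b -> y \in C -> pos b < pos y ->
  pos a < pos b -> e a y -> e a b.
Proof.
move=> bI hb yC hby hab eay; apply: (MPpos hb (ltnW hby)) => // x hx exb.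
have xC : x \in C by apply: (nbrI_C bI); rewrite esym.
apply: Hclq => //; apply/eqP => exy; move: hx hby; rewrite exy; lia.
Qed.

Lemma F2I b y a : b \in I -> 0 < pos b -> y \in C -> pos b < pos y ->
  pos a < pos b -> a \in I -> ~~ e a y.
Proof.
move=> bI hb yC hby hab aI; apply/negP => eay.
by move: (Hind aI bI); rewrite (F2 bI hb yC hby hab eay).
Qed.

Lemma Contig v c z : v \in I -> e v c -> pos v < pos z -> pos z < pos c ->
  z \in C /\ e v z.
Proof.
move=> vI evc hvz hzc.
have cC := nbrI_C vI evc.
have zC : z \in C.
  apply/negPn/negP => /notC_I zI.
  by move: (F2I zI (leq_ltn_trans (leq0n _) hvz) cC hzc hvz vI); rewrite evc.
split => //; apply/negPn/negP => nevz.
case: (boolP [exists d, [&& pos d < pos z, e d z & ~~ e d c]]) => [|nex].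
- case/existsP => d /and3P[hdz edz nedc].
  have dI : d \in I.
    apply: notC_I; apply/negP => dC; move: nedc; rewrite Hclq //.
    by apply/eqP => edc; move: hdz hzc; rewrite edc; lia.
  case: (ltngtP (pos d) (pos v)) => hdv.
  + have := F2 vI (leq_ltn_trans (leq0n _) hdv) zC hvz hdv edz.
    by rewrite (negbTE (Hind dI vI)).
  + have := F2 dI (leq_ltn_trans (leq0n _) hdv) cC (ltn_trans hdz hzc) hdv evc.
    by rewrite (negbTE (Hind vI dI)).
  + by move: nevz; rewrite -(pos_inj hdv) edz.
- move: nevz; rewrite (MPpos (leq_ltn_trans (leq0n _) hvz) (ltnW hzc) _ hvz evc) //.
  move=> x hx exz; apply/negPn/negP => nexc.
  by move/existsP: nex; apply; exists x; rewrite hx exz nexc.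
Qed.

Definition Qf x := (pos x == 0) || (x \in C) || [exists y, e x y && (pos x < pos y)].

Lemma L1 x y : ~~ Qf x -> pos x < pos y -> ~~ e x y.
Proof.
rewrite /Qf !negb_or => /andP[_ nex] hxy; apply/negP => exy.
by move/existsP: nex; apply; exists y; rewrite exy hxy.
Qed.

Lemma Lnot x : ~~ Qf x -> x \in I /\ 0 < pos x.
Proof.
rewrite /Qf !negb_or => /andP[/andP[h0 nxC] _]; split; first exact: notC_I.
by rewrite lt0n.
Qed.

Lemma QC x : x \in C -> Qf x.
Proof. by move=> xC; rewrite /Qf xC orbT. Qed.

Lemma LN' y : Qf y -> y \in I -> 0 < pos y -> exists c, pos y < pos c /\ e y c.
Proof.
move=> Qy yI hy; move: Qy; rewrite /Qf (negbTE (I_notC yI)) orbF.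
case/orP => [/eqP h|/existsP[c /andP[h1 h2]]]; last by exists c.
by move: hy; rewrite h.
Qed.

Lemma LN x y : Qf x -> x \in I -> pos x < pos y -> exists c, pos x < pos c /\ e x c.
Proof.
move=> Qx xI hxy.
case: (posnP (pos x)) => hx; last exact: LN'.
have h1 : 1 < size sigma by apply: leq_ltn_trans (pos_lt y); rewrite -hx.
pose b := nth x sigma 1.
have pb : pos b = 1 by rewrite /b nth_pos.
have hb : 0 < pos b by rewrite pb.
have [x' [hx' ex'b]] := G hb.
have ex' : x' = x.
  apply: pos_inj; rewrite hx; move: hx'; rewrite pb; lia.
exists b; rewrite pb hx; split => //; by rewrite -ex'.
Qed.

Lemma K x y : Qf x -> Qf y -> pos x < pos y ->
  (forall z, pos x < pos z < pos y -> ~~ Qf z) -> e x y.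
Proof.
move=> Qx Qy hxy btw.
have nxy : x != y by apply/eqP => exy; move: hxy; rewrite exy ltnn.
case: (boolP (x \in C)) => xC.
  case: (boolP (y \in C)) => yC; first exact: Hclq.
  have yI := notC_I yC.
  have hy : 0 < pos y by apply: leq_ltn_trans hxy.
  have [c [hyc eyc]] := LN' Qy yI hy.
  have cC := nbrI_C yI eyc.
  apply: (F2 yI hy cC hyc hxy); apply: Hclq => //.
  by apply/eqP => exc; move: hxy hyc; rewrite exc; lia.
have xI := notC_I xC.
have [c [hxc exc]] := LN Qx xI hxy.
case: (ltngtP (pos c) (pos y)) => hcy.
- have := btw c; rewrite hxc hcy => /(_ isT).
  by rewrite QC // (nbrI_C xI exc).
- by case: (Contig xI exc hxy hcy).
- by rewrite -(pos_inj hcy).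
Qed.

Definition Pf := filter Qf sigma.
Definition Lf := [set x | ~~ Qf x].

Lemma inPf x : (x \in Pf) = Qf x.
Proof. by rewrite mem_filter sall andbT. Qed.

Lemma Pf_sorted : sorted (fun a b => pos a < pos b) Pf.
Proof. apply: sorted_filter; first by move=> ? ? ?; apply: ltn_trans. exact: sigma_sorted. Qed.

Lemma Pf_uniq : uniq Pf.
Proof. exact: filter_uniq. Qed.

Lemma leaf_t w y : ~~ Qf w -> t w y = (ltree_parent e sigma w == Some y).
Proof.
move=> nQw; rewrite tl /ltree.
case E: (ltree_parent e sigma y == Some w); last by rewrite orbF.
move/eqP: E; move/(par_iff su sall); case=> hwy eyw _.
by move: (L1 nQw hwy); rewrite esym eyw.
Qed.

Lemma leaf_par w : ~~ Qf w -> exists p, ltree_parent e sigma w = Some p.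
Proof.
move=> nQw; have [_ hw] := Lnot nQw.
have [x [hx exw]] := G hw.
by apply: (par_exists sall hx); rewrite esym.
Qed.

Hypothesis Vpos : 0 < #|V|.

Lemma is_path_Pf : is_path t Pf.
Proof.
have : 0 < size sigma by rewrite ssize.
case Es: sigma => [//|u1 s] _.
have u1P : u1 \in Pf by rewrite inPf /Qf /pos Es /= eqxx.
have srt : sorted t Pf.
  apply: filter_sorted_rel => //.
  move=> x y _ _ Qx Qy hxy btw.
  rewrite tl /ltree; apply/orP; right; apply/eqP/(par_iff su sall); split => //.
  - rewrite esym; apply: K => // z hz; exact: btw (sall z) hz.
  - move=> z hzy eyz; rewrite leqNgt; apply/negP => hxz.
    have := btw z (sall z); rewrite -/(pos x) -/(pos z) -/(pos y) hxz hzy => /(_ isT) nQz.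
    by move: (L1 nQz hzy); rewrite esym eyz.
rewrite /is_path; move: u1P srt; case: Pf (Pf_uniq) => [//|x P'] -> _ /=.
done.
Qed.

Lemma leaf1 w : w \in Lf -> #|[set y | t w y]| = 1 /\ exists2 y, y \in Pf & t w y.
Proof.
rewrite inE => nQw; have [p hp] := leaf_par nQw.
have E : [set y | t w y] = [set p].
  by apply/setP => y; rewrite !inE leaf_t // hp /= eq_sym.
rewrite E cards1; split => //; exists p.
  move/(par_iff su sall): hp => [_ ewp _].
  by rewrite inPf QC // (nbrI_C (Lnot nQw).1 ewp).
by rewrite leaf_t // hp.
Qed.

Lemma cond2 w i j : w \in Lf -> i < j < size Pf ->
  t w (nth w Pf i) -> ~~ e w (nth w Pf j).
Proof.
rewrite inE => nQw /andP[hij hj].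
have hi : i < size Pf by apply: ltn_trans hj.
rewrite leaf_t // => /eqP /(par_iff su sall) [hpw ewp mx].
have hpq : pos (nth w Pf i) < pos (nth w Pf j) by rewrite (sorted_mono w Pf_sorted).
have Qq : Qf (nth w Pf j) by rewrite -inPf mem_nth.
case: (ltngtP (pos (nth w Pf j)) (pos w)) => hqw.
- apply/negP => ewq; have := mx _ hqw ewq; lia.
- exact: L1.
- by move: Qq; rewrite (pos_inj hqw) (negbTE nQw).
Qed.

Lemma cond3 v i : i < size Pf -> nth v Pf i = v -> v \in I ->
  (forall x, x \in take i Pf -> x \in C -> e v x) /\
  (forall x, x \in take (deg e v - #|[set y in take i Pf] :&: C|) (drop i.+1 Pf) -> e v x).
Proof.
move=> hi Ev vI.
have vP : v \in Pf by rewrite -Ev mem_nth.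
have Qv : Qf v by rewrite -inPf.
have memtake y : (y \in take i Pf) = (y \in Pf) && (pos y < pos v).
  case yP: (y \in Pf) => /=.
    by rewrite (sorted_take_mem v Pf_sorted Pf_uniq hi yP) Ev.
  by apply/negbTE; apply: contraFN yP; apply: mem_take.
have A : forall x, x \in take i Pf -> x \in C -> e v x.
  move=> x; rewrite memtake => /andP[xP hxv] xC.
  have hv : 0 < pos v by apply: leq_ltn_trans hxv.
  have [c [hvc evc]] := LN' Qv vI hv.
  have cC := nbrI_C vI evc.
  rewrite esym; apply: (F2 vI hv cC hvc hxv); apply: Hclq => //.
  by apply/eqP => exc; move: hxv hvc; rewrite exc; lia.
split => // x.
set D := drop i.+1 Pf.
have ED : drop i Pf = v :: D by rewrite (drop_nth v hi) Ev.
have Duniq : uniq D by apply: drop_uniq Pf_uniq.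
have Dsorted : sorted (fun a b => pos a < pos b) D by apply: drop_sorted Pf_sorted.
have memD y : (y \in D) = (y \in Pf) && (pos v < pos y).
  case yP: (y \in Pf) => /=; last first.
    by apply/negbTE; apply: contraFN yP; apply: mem_drop.
  have := sorted_drop_mem v Pf_sorted Pf_uniq hi yP; rewrite Ev ED inE.
  have vD : v \notin D by have := drop_uniq i Pf_uniq; rewrite ED /= => /andP[].
  case: (eqVneq y v) => [->|nyv] /=.
    by rewrite ltnn (negbTE vD).
  move=> ->; rewrite leq_eqVlt; case: eqP => //= hyv.
  by move: nyv; rewrite (pos_inj hyv) eqxx.
set m := deg e v - _ => xm.
have xD : x \in D by apply: mem_take xm.
set k := index x D.
have hk : k < m by move: xm; rewrite in_take.
have kD : k < size D by rewrite index_mem.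
have Ex : nth v D k = x by apply: nth_index.
apply/negPn/negP => nevx.
have sub : [set y | e v y] \subset ([set y in take i Pf] :&: C) :|: [set y in take k D].
  apply/subsetP => y; rewrite inE => evy.
  have yC := nbrI_C vI evy.
  have yP : y \in Pf by rewrite inPf QC.
  case: (ltngtP (pos y) (pos v)) => hyv.
  - by rewrite !inE memtake yP hyv yC.
  - have yD : y \in D by rewrite memD yP hyv.
    rewrite !inE (sorted_take_mem v Dsorted Duniq kD yD) Ex orbC.
    case: (ltngtP (pos y) (pos x)) => hyx //.
    + have hvx : pos v < pos x by move: xD; rewrite memD => /andP[].
      by case: (Contig vI evy hvx hyx) => _ evx'; move: nevx; rewrite evx'.
    + by move: nevx; rewrite -(pos_inj hyx) evy.
  - by move: evy; rewrite (pos_inj hyv) (negbTE (eirr v)).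
have c1 := subset_leq_card sub.
have c2 : #|[set y in take k D]| <= k.
  rewrite cardsE; apply: leq_trans (card_size _) _; rewrite size_takel //; exact: ltnW.
move: c1; rewrite cardsU -/(deg e v) => c1.
move: hk; rewrite /m => hk.
lia.
Qed.

Lemma forward_main :
  exists (L : {set V}) (P : seq V),
      L :&: [set x in P] = set0 /\ L :|: [set x in P] = setT /\
      is_path t P /\
      (forall w, w \in L -> #|[set y | t w y]| = 1 /\
                            (exists2 y, y \in P & t w y)) /\
      C \subset [set x in P] /\
      (forall w i j, w \in L -> i < j < size P ->
         t w (nth w P i) -> ~~ e w (nth w P j)) /\
      (forall (v : V) i, i < size P -> nth v P i = v -> v \in I ->
         (forall x, x \in take i P -> x \in C -> e v x) /\
         (forall x, x \in take (deg e v - #|[set y in take i P] :&: C|)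
                              (drop i.+1 P) -> e v x)).
Proof.
exists Lf, Pf; split; [|split; [|split; [|split; [|split; [|split]]]]].
- by apply/setP => x; rewrite !inE inPf andNb.
- by apply/setP => x; rewrite !inE inPf orNb.
- exact: is_path_Pf.
- exact: leaf1.
- by apply/subsetP => x xC; rewrite inE inPf QC.
- exact: cond2.
- exact: cond3.
Qed.

End Forward.

Lemma cycle_of_nth (T : Type) (r : rel T) (c : seq T) x0 : 0 < size c ->
  (forall k, k.+1 < size c -> r (nth x0 c k) (nth x0 c k.+1)) ->
  r (nth x0 c (size c).-1) (nth x0 c 0) -> cycle r c.
Proof.
case: c => [//|x c] _ H Hl /=.
rewrite rcons_path; apply/andP; split.
  apply/(pathP x0) => i hi; exact: H.
by move: Hl; rewrite nth_last /=.
Qed.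

Lemma index_drop_in (T : eqType) (s : seq T) k y : uniq s -> y \in s -> k <= index y s ->
  y \in drop k s /\ index y (drop k s) = index y s - k.
Proof.
move=> us ys hk.
have hks : k <= size s by apply: leq_trans hk (index_size _ _).
have yt : y \notin take k s by rewrite in_take // -leqNgt.
have := ys; rewrite -{1}(cat_take_drop k s) mem_cat (negbTE yt) /= => yd.
split => //; rewrite -{2}(cat_take_drop k s) index_cat (negbTE yt) size_takel //.
lia.
Qed.

Lemma drop_index_ge (T : eqType) (s : seq T) k y : uniq s -> y \in drop k s -> k <= index y s.
Proof.
move=> us yd; have ys := mem_drop yd.
rewrite leqNgt -in_take //; apply/negP => yt.
have := us; rewrite -(cat_take_drop k s) cat_uniq => /and3P[_ /hasP dis _].
by apply: dis; exists y.
Qed.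

Section Backward.
Variables (V : finType) (e : rel V) (C I : {set V}) (t : rel V).
Hypothesis esym : forall x y, e x y = e y x.
Hypothesis eirr : forall x, ~~ e x x.
Hypothesis HCI : C :&: I = set0.
Hypothesis HCU : C :|: I = setT.
Hypothesis Hclq : forall x y, x \in C -> y \in C -> x != y -> e x y.
Hypothesis Hind : forall x y, x \in I -> y \in I -> ~~ e x y.
Hypothesis tsym : forall x y, t x y = t y x.
Hypothesis tirr : forall x, ~~ t x x.
Hypothesis tsub : forall x y, t x y -> e x y.
Hypothesis tacyc : acyclic t.
Variables (L : {set V}) (P : seq V).
Hypothesis H0 : L :&: [set x in P] = set0.
Hypothesis H0' : L :|: [set x in P] = setT.
Hypothesis Hpath : is_path t P.
Hypothesis H1 : forall w, w \in L -> #|[set y | t w y]| = 1 /\ (exists2 y, y \in P & t w y).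
Hypothesis HC : C \subset [set x in P].
Hypothesis H2 : forall w i j, w \in L -> i < j < size P ->
         t w (nth w P i) -> ~~ e w (nth w P j).
Hypothesis H3 : forall (v : V) i, i < size P -> nth v P i = v -> v \in I ->
         (forall x, x \in take i P -> x \in C -> e v x) /\
         (forall x, x \in take (deg e v - #|[set y in take i P] :&: C|)
                              (drop i.+1 P) -> e v x).

Local Notation notC_I := (notC_I HCU).
Local Notation nbrI_C := (nbrI_C HCU Hind).

Lemma Puniq : uniq P.
Proof. by move: Hpath; rewrite /is_path; case: P => // x P' /andP[]. Qed.

Lemma Psize : 0 < size P.
Proof. by move: Hpath; rewrite /is_path; case: P. Qed.

Lemma Ppath x0 k : k.+1 < size P -> t (nth x0 P k) (nth x0 P k.+1).
Proof.
move: Hpath; rewrite /is_path; case: P => [//|x P'] /andP[_ /(pathP x0) H] hk.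
exact: H.
Qed.

Lemma memPL x : (x \in P) = (x \notin L).
Proof.
have h1 : x \in L :&: [set x in P] = false by rewrite H0 inE.
have h2 : x \in L :|: [set x in P] by rewrite H0' inE.
move: h1 h2; rewrite !inE; by case: (x \in L); case: (x \in P).
Qed.

Lemma CP x : x \in C -> x \in P.
Proof. by move=> xC; move/subsetP: HC => /(_ x xC); rewrite inE. Qed.

Lemma LI x : x \in L -> x \in I.
Proof.
move=> xL; apply: notC_I; apply/negP => /CP; by rewrite memPL xL.
Qed.

Lemma block h y : h < size P -> nth y P h \in I -> y \in drop h.+1 P ->
  e (nth y P h) y -> index y (drop h.+1 P) < deg e (nth y P h) - #|[set z in take h P] :&: C|.
Proof.
move=> hh.
set x := nth y P h => xI yD exy.
have Exx : nth x P h = x by rewrite /x (set_nth_default y x hh).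
have [a3 b3] := H3 hh Exx xI.
set D := drop h.+1 P.
set A := [set z in take h P] :&: C.
set m := deg e x - #|A|.
rewrite ltnNge; apply/negP => hm.
have Duniq : uniq D by apply: drop_uniq Puniq.
have hmD : m <= size D by apply: leq_trans hm _; apply: ltnW; rewrite index_mem.
have cB : #|[set z in take m D]| = m.
  by rewrite cardsE; move/card_uniqP: (take_uniq m Duniq) => ->; rewrite size_takel.
have dis : forall z, z \in take h P -> z \notin D.
  move=> z zt; apply/negP => zD.
  have := Puniq; rewrite -(cat_take_drop h P) cat_uniq => /and3P[_ /hasP dd _].
  apply: dd; exists z => //; rewrite (drop_nth y hh) inE; by rewrite -/D zD orbT.
have subA : A \subset [set z | e x z].
  by apply/subsetP => z; rewrite !inE => /andP[zt zC]; apply: a3.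
have sub : y |: (A :|: [set z in take m D]) \subset [set z | e x z].
  apply/subsetP => z; rewrite !inE => /orP[/eqP ->|/orP[/andP[zt zC]|zt]] //.
  - exact: a3.
  - exact: b3.
have yA : y \notin A by rewrite !inE negb_and; apply/orP; left; apply/negP => /dis; rewrite yD.
have yB : y \notin [set z in take m D] by rewrite inE in_take // -leqNgt.
have AB : A :&: [set z in take m D] = set0.
  apply/setP => z; rewrite !inE; apply/negbTE/negP => /andP[/andP[zt _] /mem_take zD].
  by move: (dis z zt); rewrite zD.
have c1 := subset_leq_card sub.
have c2 := subset_leq_card subA.
move: c1; rewrite cardsU1 cardsU AB cards0 cB inE negb_or yA yB /= -/(deg e x).
move: c2; rewrite -/(deg e x) /m; lia.
Qed.

Variables (Lab : Type) (lab : seq V -> V -> Lab) (lt : Lab -> Lab -> bool).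
Hypothesis spec : searchspec e lab lt.

Lemma backward_main : exists sigma, search_ordering lab lt sigma /\
  forall x y, t x y = ltree e sigma x y.
Proof.
have [l' [pl' Hl']] := max_first (lab P) (enum L) (ss_irr spec) (ss_trans spec).
have meml' x : (x \in l') = (x \in L) by rewrite -(perm_mem pl') mem_enum.
set sigma := P ++ l'.
have su : uniq sigma.
  rewrite cat_uniq Puniq -(perm_uniq pl') enum_uniq andbT /=.
  by apply/hasP => -[x]; rewrite meml' => xL; rewrite memPL xL.
have sall x : x \in sigma.
  by rewrite mem_cat meml' memPL; case: (x \in L).
have ssize : size sigma = #|V|.
  rewrite size_cat -(perm_size pl') -cardE -cardsT -H0' cardsU H0 cards0 subn0.
  by rewrite cardsE; move/card_uniqP: Puniq => ->; rewrite addnC.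
have posP x0 j : j < size P -> pos sigma (nth x0 P j) = j.
  by move=> hj; rewrite /pos index_cat mem_nth // index_uniq // Puniq.
have posPx x : x \in P -> pos sigma x = index x P.
  by move=> xP; rewrite /pos index_cat xP.
have posL w : w \in L -> size P <= pos sigma w.
  move=> wL; rewrite /pos index_cat.
  have -> : (w \in P) = false by rewrite memPL wL.
  exact: leq_addr.
have parS x0 j : j.+1 < size P ->
    ltree_parent e sigma (nth x0 P j.+1) = Some (nth x0 P j).
  move=> hj; have hj' : j < size P := ltnW hj.
  apply/(par_iff su sall); rewrite !posP //; split => //.
  by rewrite esym; apply: tsub; apply: Ppath.
have par0 x0 : ltree_parent e sigma (nth x0 P 0) = None.
  by apply: (par_none sall) => y; rewrite posP ?Psize.
have parL w p : w \in L -> p \in P -> t w p -> ltree_parent e sigma w = Some p.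
  move=> wL pP twp; apply/(par_iff su sall); split.
  - rewrite posPx //; apply: leq_trans (posL _ wL); by rewrite index_mem.
  - exact: tsub.
  - move=> y hy ewy.
    case yL: (y \in L).
      by move: (Hind (LI wL) (LI yL)); rewrite ewy.
    have yP : y \in P by rewrite memPL yL.
    rewrite !posPx // leqNgt; apply/negP => hpy.
    have := H2 wL (i := index p P) (j := index y P); rewrite hpy index_mem yP.
    by rewrite nth_index // nth_index // twp ewy => /(_ isT isT).
have chord x0 a b : a.+1 < b -> b < size P -> ~~ t (nth x0 P a) (nth x0 P b).
  move=> hab hb; apply/negP => tab.
  set c := take (b - a).+1 (drop a P).
  have sc : size c = (b - a).+1 by rewrite size_takel // size_drop; lia.
  have nc k : k < size c -> nth x0 c k = nth x0 P (a + k).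
    by rewrite sc => hk; rewrite nth_take // nth_drop.
  have h3 : 2 < (b - a).+1 by lia.
  have := tacyc (c := c); rewrite take_uniq ?drop_uniq ?Puniq // sc.
  move=> /(_ isT h3) /negP; apply; apply: (@cycle_of_nth _ t c x0); first by rewrite sc.
  + move=> k hk; rewrite !nc ?addnS; [apply: Ppath|lia|lia].
    by move: hk; rewrite sc; lia.
  + rewrite !nc ?sc //= addn0 tsym; have -> : a + (b - a) = b by lia.
    exact: tab.
have tl1 x y : t x y -> ltree e sigma x y.
  have key x' y' : x' \in L -> t x' y' -> ltree e sigma x' y'.
    move=> xL txy; have [c1 [p pP txp]] := H1 xL.
    have : y' = p.
      move/eqP/cards1P: c1 => [z Ez].
      have : y' \in [set z0 | t x' z0] by rewrite inE.
      have : p \in [set z0 | t x' z0] by rewrite inE.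
      by rewrite Ez !inE => /eqP -> /eqP ->.
    by move=> ->; rewrite /ltree (parL _ _ xL pP txp) eqxx.
  case xL: (x \in L); first exact: key.
  case yL: (y \in L).
    by rewrite tsym => tyx; rewrite /ltree orbC; apply: key.
  have xP : x \in P by rewrite memPL xL.
  have yP : y \in P by rewrite memPL yL.
  have lem a b : a < b -> b < size P -> t (nth x P a) (nth x P b) ->
      ltree e sigma (nth x P a) (nth x P b).
    move=> hab hb tab; case: (ltngtP a.+1 b) => h.
    - by move: tab; rewrite (negbTE (chord x a b h hb)).
    - lia.
    - by rewrite /ltree -h (parS x a) ?h // eqxx orbT.
  rewrite -(nth_index x xP) -(nth_index x yP).
  case: (ltngtP (index x P) (index y P)) => hxy txy.
  - by apply: lem; rewrite // index_mem.
  - move: txy; rewrite tsym => tyx; rewrite /ltree orbC.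
    by apply: lem; rewrite // index_mem.
  - by move: txy; rewrite hxy (negbTE (tirr _)).
have par_t x y : ltree_parent e sigma x = Some y -> t x y.
  case xL: (x \in L).
    have [_ [p pP txp]] := H1 xL.
    by rewrite (parL _ _ xL pP txp) => -[<-].
  have xP : x \in P by rewrite memPL xL.
  rewrite -(nth_index x xP); case E: (index x P) => [|a].
    by rewrite par0.
  have ha : a.+1 < size P by rewrite -E index_mem.
  rewrite parS // => -[<-]; rewrite tsym; exact: Ppath.
exists sigma; split; last first.
  move=> x y; apply/idP/idP; first exact: tl1.
  rewrite /ltree => /orP[/eqP h|/eqP h]; first exact: par_t.
  by rewrite tsym; apply: par_t.
split; first by rewrite /is_vertex_ordering su ssize eqxx.
move=> i /andP[i0 isz] u ud.
case: (ltnP i (size P)) => hiP.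
- rewrite take_cat hiP nth_cat hiP.
  move: ud; rewrite /sigma drop_cat hiP mem_cat => ud.
  set w := nth u P i.
  apply: (ss_A1 spec).
    rewrite size_take; case: ifP => _; last by rewrite -ssize size_cat leq_addr.
    apply: leq_trans (ltnW hiP) _; by rewrite -ssize size_cat leq_addr.
  move=> x xt exu.
  have wP : w \in P by rewrite mem_nth.
  have xP : x \in P by apply: mem_take xt.
  have hxi : index x P < i by rewrite -in_take.
  have hwi : index w P = i by rewrite index_uniq // Puniq.
  case xC: (x \in C).
    case wC: (w \in C).
      apply: Hclq => //; apply/eqP => exw; move: hxi; by rewrite exw hwi ltnn.
    have wI := notC_I (negbT wC).
    have Ew : nth w P i = w by rewrite /w (set_nth_default u w hiP).
    by rewrite esym; apply: (H3 hiP Ew wI).1.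
  have xI := notC_I (negbT xC).
  have uC := nbrI_C xI exu.
  have uP := CP uC.
  have uD : u \in drop i P.
    case/orP: ud => // ul; by move: uP; rewrite memPL -meml' ul.
  case: (eqVneq u w) => [euw|nuw]; first by rewrite -euw.
  have hui : i < index u P.
    have := drop_index_ge Puniq uD; rewrite leq_eqVlt; case/orP => // /eqP eiu.
    by move: nuw; rewrite /w eiu nth_index // eqxx.
  set h := index x P.
  have hh : h < size P by rewrite index_mem.
  have Ex : nth x P h = x by rewrite nth_index.
  have [uD' iuD] := index_drop_in Puniq uP (leq_trans hxi (ltnW hui)).
  have := block (y := u) hh; rewrite (set_nth_default x u hh) Ex.
  move=> /(_ xI uD' exu); rewrite iuD => hm.
  have hwh : h.+1 <= index w P by rewrite hwi.
  have [wD' iwD] := index_drop_in Puniq wP hwh.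
  apply: (H3 hh Ex xI).2; rewrite in_take // iwD hwi.
  exact: leq_ltn_trans (leq_sub2r _ (ltnW hui)) hm.
- rewrite take_cat ltnNge hiP /= nth_cat ltnNge hiP /=.
  move: ud; rewrite /sigma drop_cat ltnNge hiP /= => ud.
  set k := i - size P.
  have hk : k < size l' by rewrite /k ltn_subLR // -size_cat.
  set w := nth u l' k.
  have wL : w \in L by rewrite -meml' mem_nth.
  have uL : u \in L by rewrite -meml'; apply: mem_drop ud.
  rewrite (ss_cat spec P (t := take k l') (v := w)); last first.
    by move=> y /mem_take; rewrite meml' => yL; apply: Hind; apply: LI.
  rewrite (ss_cat spec P (t := take k l') (v := u)); last first.
    by move=> y /mem_take; rewrite meml' => yL; apply: Hind; apply: LI.
  exact: Hl' hk u ud.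
Qed.

End Backward.

Lemma search_MP (V : finType) (e : rel V) (L : Type) lab lt
  (sp : @searchspec V e L lab lt) sigma : search_ordering lab lt sigma ->
  [/\ uniq sigma, size sigma = #|V| & forall i, 0 < i < size sigma ->
     forall u, u \in drop i sigma -> ~ SubNs e (take i sigma) (nth u sigma i) u].
Proof.
case=> /andP[su /eqP ss] H; split => // i hi u ud sn.
have := H i hi u ud; rewrite (ss_A2 sp) //.
by rewrite size_take -ss; case: ifP => // /ltnW.
Qed.

Unset Implicit Arguments.

Theorem theorem5 (V : finType) (e : rel V) (C I : {set V}) (t : rel V)
    (X : search) :
  simple_graph e -> connected e -> split_partition e C I ->
  spanning_tree e t ->
  (exists sigma : seq V,
      is_search_ordering e X sigma /\ (forall x y, t x y = ltree e sigma x y))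
  <->
  (exists (L : {set V}) (P : seq V),
      (* partition V = L u V(P), P a path of T *)
      L :&: [set x in P] = set0 /\ L :|: [set x in P] = setT /\
      is_path t P /\
      (* (1) T is a caterpillar with leaves L and dominating path P, C in P *)
      (forall w, w \in L -> #|[set y | t w y]| = 1 /\
                            (exists2 y, y \in P & t w y)) /\
      C \subset [set x in P] /\
      (* (2) *)
      (forall w i j, w \in L -> i < j < size P ->
         t w (nth w P i) -> ~~ e w (nth w P j)) /\
      (* (3) ; index i is 0-based here, so {v_1..v_(i-1)} = take i P *)
      (forall (v : V) i, i < size P -> nth v P i = v -> v \in I ->
         (forall x, x \in take i P -> x \in C -> e v x) /\
         (forall x, x \in take (deg e v - #|[set y in take i P] :&: C|)
                              (drop i.+1 P) -> e v x))).
Proof.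
move=> [esym eirr] [Vpos conn] [HCI [HCU [Hclq Hind]]] [[tsym tirr] [tsub [_ tacyc]]].
split.
- case=> sigma [Hs tl].
  have fw : forall (L : Type) lab lt, @searchspec V e L lab lt ->
      search_ordering lab lt sigma -> _ := fun L lab lt sp Hs' =>
    let: And3 su ss MP := search_MP sp Hs' in
    forward_main esym eirr conn HCI HCU Hclq Hind su ss MP tl Vpos.
  case: X Hs => Hs.
  + exact: fw (mns_spec e) Hs.
  + exact: fw (mcs_spec e) Hs.
  + exact: fw (ldfs_spec e) Hs.
  + exact: fw (lbfs_spec e) Hs.
- case=> L [P [H0 [H0' [Hp [H1 [HC [H2 H3]]]]]]].
  have bw := backward_main esym HCU Hclq Hind tsym tirr tsub tacyc H0 H0' Hp H1 HC H2 H3.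
  case: X.
  + exact: bw (mns_spec e).
  + exact: bw (mcs_spec e).
  + exact: bw (ldfs_spec e).
  + exact: bw (lbfs_spec e).
Qed.
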